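(* Let $n\ge1$ and let $c:E_n\to\mathbb C$ be an admissible edge weighting of $Q_n$ with $c(ij)\ne0$ for all edges $ij\in E_n$. Then there is $\mathbf t=[t_0,\dots,t_{n-1}]\in\Delta_{n-1}$ such that $|c(ij)|=\sqrt{t_k}$ for all edges $ij\in E_n$ with $i = j\#k$.
   Context: For $n\ge1$, identify integers $0\le i<2^n$ with their $n$-digit binary representations; $i\#k$ is $i$ with its $k$-th digit flipped. The hypercube $Q_n$ has vertex classes $U_n$ (even number of $1$'s) and $V_n$ (odd number of $1$'s) and edge set $E_n$ of pairs $ij$ ($i\in U_n$, $j\in V_n$, $j=i\#k$ for some $k<n$); $\mathcal N(x)$ is the set of neighbors of $x$. $\Delta_{n-1}=\{[t_0,\dots,t_{n-1}]\mid t_k\ge0,\sum t_k=1\}$. For $c:E_n\to\mathbb C$, $U_n(c)$, $V_n(c)$ are the vertices of $U_n$, $V_n$ incident to some edge with nonzero weight; $c$ is admissible if $\sum_{i\in\mathcal N(j_1)\cap\mathcal N(j_2)}c(ij_1)\overline{c(ij_2)}=\delta_{j_1j_2}$ for all $j_1,j_2\in V_n(c)$ and $\sum_{j\in\mathcal N(i_1)\cap\mathcal N(i_2)}c(i_1j)\overline{c(i_2j)}=\delta_{i_1i_2}$ for all $i_1,i_2\in U_n(c)$. *)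

(* Defs.v *)
From HB Require Import structures.
From mathcomp Require Import all_boot all_order all_algebra.
Set Implicit Arguments. Unset Strict Implicit. Unset Printing Implicit Defensive.
Import Order.TTheory GRing.Theory Num.Theory.
Local Open Scope ring_scope.

Definition vert (n : nat) := {ffun 'I_n -> bool}.

Definition flip n (i : vert n) (k : 'I_n) : vert n :=
  [ffun m => if m == k then ~~ i m else i m].

Definition inU n (i : vert n) : bool := ~~ odd #|[set m | i m]|.
Definition inV n (j : vert n) : bool := odd #|[set m | j m]|.

Definition is_edge n (i j : vert n) : bool :=
  inU i && [exists k, j == flip i k].

Definition nbr n (x : vert n) : {set vert n} := [set y | [exists k, y == flip x k]].

(* an edge weighting c : E_n -> C is given as a function on pairs of vertices;
   only its values on edges (i,j), i in U_n, are ever used. *)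
Definition Uc (C : numClosedFieldType) n (c : vert n -> vert n -> C) : {set vert n} :=
  [set i | inU i && [exists j, is_edge i j && (c i j != 0)]].
Definition Vc (C : numClosedFieldType) n (c : vert n -> vert n -> C) : {set vert n} :=
  [set j | inV j && [exists i, is_edge i j && (c i j != 0)]].

Definition admissible (C : numClosedFieldType) n (c : vert n -> vert n -> C) : Prop :=
  (forall j1 j2, j1 \in Vc c -> j2 \in Vc c ->
     \sum_(i in nbr j1 :&: nbr j2) c i j1 * (c i j2)^* = (j1 == j2)%:R) /\
  (forall i1 i2, i1 \in Uc c -> i2 \in Uc c ->
     \sum_(j in nbr i1 :&: nbr i2) c i1 j * (c i2 j)^* = (i1 == i2)%:R).

(* the simplex Delta_{n-1} (points with coordinates in C that are >= 0, hence real) *)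
Definition in_simplex (C : numClosedFieldType) n (t : 'I_n -> C) : Prop :=
  (forall k, 0 <= t k) /\ \sum_(k < n) t k = 1.

(* Main.v *)
Require Import Defs.
From HB Require Import structures.
From mathcomp Require Import all_boot all_order all_algebra.
Import Order.TTheory GRing.Theory Num.Theory.
Set Implicit Arguments. Unset Strict Implicit.
Local Open Scope ring_scope.

Section Flip.
Variable n : nat.
Implicit Types (v : vert n) (a b k : 'I_n).

Lemma flipE v k m : flip v k m = if m == k then ~~ v m else v m.
Proof. by rewrite /flip ffunE. Qed.

Lemma flipK v k : flip (flip v k) k = v.
Proof. by apply/ffunP=> m; rewrite !flipE; case: eqP => // ->; rewrite negbK. Qed.

Lemma flipC v a b : flip (flip v a) b = flip (flip v b) a.
Proof. by apply/ffunP=> m; rewrite !flipE; do 2 case: eqP => //. Qed.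

Lemma flip_inj v a b : flip v a = flip v b -> a = b.
Proof.
move/ffunP/(_ a); rewrite !flipE eqxx; case: eqP => // _.
by case: (v a).
Qed.

Lemma flip_neq v a : flip v a != v.
Proof. by apply/eqP=> /ffunP/(_ a); rewrite flipE eqxx; case: (v a). Qed.

Lemma nbrP x y : reflect (exists k, y = flip x k) (y \in nbr x).
Proof. by rewrite inE; apply: (iffP existsP) => -[k /eqP]; exists k. Qed.

Lemma inU_flip v k : inU (flip v k) = ~~ inU v.
Proof.
rewrite /inU negbK.
have -> : [set m | flip v k m] =
  if v k then [set m | v m] :\ k else k |: [set m | v m].
  apply/setP=> m; case: ifP => vk; rewrite !inE flipE;
  by case: eqP => // ->; rewrite vk.
case: ifP => vk.
  by rewrite (cardsD1 k [set m | v m]) inE vk add1n /=; case: odd.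
by rewrite cardsU1 inE vk /= negbK.
Qed.

Lemma inV_U v : inV v = ~~ inU v.
Proof. by rewrite /inU /inV negbK. Qed.

Lemma common_nbr x a b : a != b ->
  nbr (flip x a) :&: nbr (flip x b) = [set x; flip (flip x a) b].
Proof.
move=> ab; apply/setP=> y; rewrite in_setI in_set2; apply/andP/orP.
  case=> /nbrP[k1 ->] /nbrP[k2 /ffunP E].
  have Ea := E a; have Eb := E b.
  rewrite !flipE !eqxx (negbTE ab) [b == a]eq_sym (negbTE ab) in Ea Eb.
  have [k1a|k1a] := eqVneq a k1.
    by left; rewrite -k1a flipK eqxx.
  right; move: Ea; rewrite (negbTE k1a).
  case: eqP => [k2a|_]; last by case: (x a).
  move=> _; move: Eb; rewrite -k2a [b == a]eq_sym (negbTE ab).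
  by case: eqP => [-> //|_]; case: (x b).
case=> /eqP ->.
  by split; apply/nbrP; [exists a|exists b]; rewrite flipK.
split; apply/nbrP; first by exists b.
by exists a; rewrite flipC.
Qed.

End Flip.

Lemma sum2 (R : nmodType) (T : finType) (x y : T) (F : T -> R) :
  x != y -> \sum_(i in [set x; y]) F i = F x + F y.
Proof. by move=> xy; rewrite big_setU1 ?big_set1 // inE; exact: xy. Qed.

Lemma alg4 (R : numDomainType) (A1 B1 B2 A2 : R) :
  0 < A1 -> 0 < B1 -> 0 < B2 -> 0 < A2 ->
  A1 * B1 = B2 * A2 -> A1 * B2 = B1 * A2 -> B1 = B2 /\ A1 = A2.
Proof.
move=> a1 b1 b2 a2 e1 e2.
have e3 : B2 ^+ 2 * A2 = B1 ^+ 2 * A2.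
  by rewrite !expr2 -!mulrA -e1 -e2 mulrCA [RHS]mulrCA [B1 * B2]mulrC.
have /eqP : B1 ^+ 2 = B2 ^+ 2 by apply: (mulIf (lt0r_neq0 a2)).
rewrite eqrXn2 ?ltW // => /eqP eB; split => //.
by apply: (mulIf (lt0r_neq0 b1)); rewrite e1 eB mulrC.
Qed.

Lemma norm_sum0 (C : numClosedFieldType) (x y : C) : x + y = 0 -> `|x| = `|y|.
Proof. by move/eqP; rewrite addr_eq0 => /eqP ->; rewrite normrN. Qed.

Section Main.
Variables (C : numClosedFieldType) (n : nat) (c : vert n -> vert n -> C).
Hypothesis hadm : admissible c.
Hypothesis hnz : forall i j, is_edge i j -> c i j != 0.

Lemma edgeU (u : vert n) k : inU u -> is_edge u (flip u k).
Proof. by move=> hu; rewrite /is_edge hu; apply/existsP; exists k. Qed.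

Lemma inUc (u : vert n) (k : 'I_n) : inU u -> u \in Uc c.
Proof.
move=> hu; rewrite inE hu; apply/existsP; exists (flip u k).
by rewrite edgeU // hnz // edgeU.
Qed.

Lemma inVc (u : vert n) k : inU u -> flip u k \in Vc c.
Proof.
move=> hu; rewrite inE inV_U inU_flip negbK hu; apply/existsP; exists u.
by rewrite edgeU // hnz // edgeU.
Qed.

Definition W (u : vert n) k := `|c u (flip u k)|.

Lemma square (u : vert n) a b : inU u -> a != b ->
  W u a = W (flip (flip u a) b) a /\ W u b = W (flip (flip u a) b) b.
Proof.
move=> hu ab; set u' := flip (flip u a) b.
have hu' : inU u' by rewrite /u' !inU_flip negbK.
have j2E : flip u' a = flip u b by rewrite /u' flipC flipK.
have j1E : flip u' b = flip u a by rewrite /u' flipK.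
have uu' : u != u'.
  by apply/eqP => /ffunP/(_ a); rewrite /u' !flipE eqxx (negbTE ab); case: (u a).
have jj : flip u a != flip u b.
  by apply/eqP => /flip_inj /eqP; rewrite (negbTE ab).
have [hV hU] := hadm.
have eV := hV _ _ (inVc a hu) (inVc b hu).
rewrite common_nbr // sum2 // (negbTE jj) in eV.
have eU := hU _ _ (inUc a hu) (inUc a hu').
have cn : nbr u :&: nbr u' = [set flip u a; flip u b].
  have := common_nbr (flip u a) ab; rewrite flipK => -> //.
rewrite cn sum2 // (negbTE uu') in eU.
move/norm_sum0: eV; rewrite !normrM !norm_conjC => e1.
move/norm_sum0: eU; rewrite !normrM !norm_conjC => e2.
have pos : forall v k, inU v -> 0 < `|c v (flip v k)|.
  by move=> v k hv; rewrite normr_gt0 hnz // edgeU.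
have [] := alg4 (pos u a hu) (pos u b hu) _ _ e1 e2.
- by have := pos u' b hu'; rewrite j1E.
- by have := pos u' a hu'; rewrite j2E.
rewrite /W j2E j1E => e3 e4; split; [exact e4 | exact e3].
Qed.

End Main.

Section Main2.
Variables (C : numClosedFieldType) (n : nat) (c : vert n -> vert n -> C).
Hypothesis hadm : admissible c.
Hypothesis hnz : forall i j, is_edge i j -> c i j != 0.

Definition W' (v : vert n) k := if inU v then W c v k else W c (flip v k) k.

Lemma W'_flip v m k : W' (flip v m) k = W' v k.
Proof.
rewrite /W' inU_flip; have [mk|mk] := eqVneq m k.
  by rewrite -mk; case hv: (inU v) => /=; rewrite ?flipK.
case hv: (inU v) => /=.
  by have [_ ->] := square hadm hnz hv mk; rewrite flipC.
have hu : inU (flip v k) by rewrite inU_flip hv.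
have km : k != m by rewrite eq_sym.
have [-> _] := square hadm hnz hu km.
by rewrite flipK.
Qed.

Definition z0 : vert n := [ffun => false].

Lemma W'_const v k : W' v k = W' z0 k.
Proof.
move: {2}#|[set m | v m]| (erefl #|[set m | v m]|) => N.
elim: N v => [|N IH] v hN.
  suff -> : v = z0 by [].
  apply/ffunP => m; rewrite ffunE; apply/negbTE/negP => vm.
  by move: hN; rewrite (cardsD1 m) inE vm.
have [m vm] : exists m, v m.
  case: (pickP v) => [m vm|h]; first by exists m.
  by move: hN; rewrite (_ : [set m | v m] = set0) ?cards0 //; apply/setP=> m; rewrite !inE h.
rewrite -(flipK v m) W'_flip IH //.
have := hN; rewrite (cardsD1 m) inE vm add1n => -[<-].
by apply: eq_card => x; rewrite !inE flipE; case: eqP => [->|]; rewrite ?vm.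
Qed.

End Main2.

Theorem lemma5p1 (C : numClosedFieldType) (n : nat) (hn : (1 <= n)%N)
  (c : vert n -> vert n -> C) :
  admissible c ->
  (forall i j, is_edge i j -> c i j != 0) ->
  exists t : 'I_n -> C, in_simplex t /\
    (forall (i j : vert n) (k : 'I_n), is_edge i j -> i = flip j k ->
       `|c i j| = sqrtC (t k)).
Proof.
move=> hadm hnz.
have hz : inU (z0 n).
  rewrite /inU (_ : [set m | z0 n m] = set0) ?cards0 //.
  by apply/setP => m; rewrite !inE ffunE.
exists (fun k => W c (z0 n) k ^+ 2); split; last first.
  move=> i j k /andP[hi _] hij.
  have -> : j = flip i k by rewrite hij flipK.
  rewrite sqrCK ?normr_ge0 //.
  have := W'_const hadm hnz i k; rewrite /W' hi hz => <-.
  by [].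
split=> [k|]; first by rewrite exprn_ge0 ?normr_ge0.
have [_ hU] := hadm.
have := hU _ _ (inUc hnz (Ordinal hn) hz) (inUc hnz (Ordinal hn) hz).
rewrite setIid eqxx /= => e; rewrite -(mulr1n (1 : C)) -e.
have -> : nbr (z0 n) = [set flip (z0 n) k | k : 'I_n].
  apply/setP => y; apply/nbrP/imsetP => [[k ->]|[k _ ->]]; by exists k.
rewrite big_imset /=; last by move=> x y _ _; apply: flip_inj.
by apply: eq_bigr => k _; rewrite /W normCK.
Qed.
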